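(* Consider a system with a finite set $S$ of tasks, periods $\tau_X$, frame length $T=\mathrm{lcm}\{\tau_X : X\in S\}$ and per-execution rewards $r^1_X\ge r^2_X\ge\dots\ge r^{\tau_X}_X\ge 0$ (as in the context). Let $n=(n^i_X)_{X\in S,\,1\le i\le\tau_X}$ be a vector of integers satisfying $0\le n^i_X\le T/\tau_X$ for all $X\in S$, $1\le i\le \tau_X$, and $\sum_{X\in S}\sum_{i=1}^{\tau_X} n^i_X\le T$. Then there exists a scheduling policy under which the average reward of every task $X\in S$ satisfies $q_X\ge\sum_{i=1}^{\tau_X} n^i_X r^i_X$.
   Context: A system consists of a finite set $S$ of tasks. Time is slotted, $t\in\{0,1,2,\dots\}$. Each task $X\in S$ has a period $\tau_X$ (a positive integer); time is partitioned into consecutive periods of $X$ of $\tau_X$ slots each, the first starting at $t=0$. In each period, task $X$ has one job, which is removed from the system at the end of that period. Let $T$ be the least common multiple of $\{\tau_X : X\in S\}$; time is partitioned into consecutive frames of $T$ slots each, the first starting at $t=0$. A scheduling policy chooses in each time slot either to idle or to execute the job of exactly one task; a job may be executed in any number of slots within its period. Each task $X$ has rewards $r^1_X\ge r^2_X\ge\dots\ge r^{\tau_X}_X\ge 0$: when the job of $X$ is executed for the $i$-th time within a period, $X$ obtains reward $r^i_X$. Let $s_X(t)$ be the total reward obtained by $X$ between time $0$ and time $t$; the average reward of $X$ is $q_X=\liminf_{t\to\infty} s_X(t)/(t/T)$. *)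

(* Defs.v *)
From mathcomp Require Import all_boot all_order all_algebra.
From mathcomp Require Import all_classical all_reals all_analysis.
Set Implicit Arguments. Unset Strict Implicit. Unset Printing Implicit Defensive.
Import Order.TTheory GRing.Theory Num.Theory.
Local Open Scope ring_scope.

Definition frame (S : finType) (tau : S -> nat) : nat :=
  \big[lcmn/1%N]_(X : S) tau X.

(* A (deterministic) scheduling policy: in slot t, [None] = idle,
   [Some X] = execute the job of task X. *)
Definition policy (S : finType) := nat -> option S.

Definition exec_count (S : finType) (tau : S -> nat) (p : policy S) (X : S) (t : nat) : nat :=
  \sum_((t %/ tau X) * tau X <= u < t.+1) (p u == Some X).

Definition slot_reward (R : realType) (S : finType) (tau : S -> nat)
  (r : S -> nat -> R) (p : policy S) (X : S) (t : nat) : R :=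
  if p t == Some X then r X (exec_count tau p X t) else 0.

Definition total_reward (R : realType) (S : finType) (tau : S -> nat)
  (r : S -> nat -> R) (p : policy S) (X : S) (t : nat) : R :=
  \sum_(0 <= u < t) slot_reward tau r p X u.

Definition avg_reward (R : realType) (S : finType) (tau : S -> nat)
  (r : S -> nat -> R) (p : policy S) (X : S) : \bar R :=
  limn_einf (fun t : nat => (total_reward tau r p X t / (t%:R / (frame tau)%:R))%:E).

(* Main.v *)
Require Import Defs.
From mathcomp Require Import all_boot all_order all_algebra.
From mathcomp Require Import all_classical all_reals all_analysis.
Import Order.TTheory GRing.Theory Num.Theory.

From mathcomp Require Import zify ring lra.
From mathcomp Require Import fintype finset bigop.
Set Implicit Arguments. Unset Strict Implicit. Unset Printing Implicit Defensive.
Local Open Scope nat_scope.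


Definition nbh (L R : finType) (adj : L -> R -> bool) (B : {set L}) : {set R} :=
  [set y | [exists x in B, adj x y]].

Lemma nbhU (L R : finType) (adj : L -> R -> bool) (B C : {set L}) : nbh adj (B :|: C) = nbh adj B :|: nbh adj C.
Proof.
apply/setP=> y; rewrite !inE; apply/existsP/orP.
  by case=> x /andP[]; rewrite inE => /orP[] xi a; [left|right]; apply/existsP; exists x; rewrite xi.
by case=> /existsP[x /andP[xi a]]; exists x; rewrite inE xi ?orbT.
Qed.

Lemma nbhS (L R : finType) (adj : L -> R -> bool) (B C : {set L}) : B \subset C -> nbh adj B \subset nbh adj C.
Proof.
move=> /fintype.subsetP BC; apply/fintype.subsetP=> y; rewrite !inE => /existsP[x /andP[xi a]].
by apply/existsP; exists x; rewrite BC.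
Qed.

Lemma nbhP (L R : finType) (adj : L -> R -> bool) (B : {set L}) x y : x \in B -> adj x y -> y \in nbh adj B.
Proof. by move=> xB a; rewrite inE; apply/existsP; exists x; rewrite xB. Qed.

Lemma hall_gen (L R : finType) (r0 : R) n : forall (adj : L -> R -> bool) (A : {set L}), #|A| <= n ->
  (forall B : {set L}, B \subset A -> #|B| <= #|nbh adj B|) ->
  exists f : L -> R, {in A &, injective f} /\ {in A, forall x, adj x (f x)}.
Proof.
elim: n => [|n IH] adj A cA hc.
  have -> : A = set0 by apply/eqP; rewrite -cards_eq0 -leqn0.
  by exists (fun _ => r0); split=> x; rewrite inE.
have [tight|notight] := boolP [exists B : {set L}, [&& B \proper A, B != set0 & #|nbh adj B| <= #|B|]].
  case/existsP: tight => B /and3P[pBA nB0 tB].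
  have sBA := proper_sub pBA.
  have cB : #|B| <= n by rewrite -ltnS (leq_trans (proper_card pBA)).
  have [f1 [i1 a1]] := IH adj B cB (fun C sCB => hc C (subset_trans sCB sBA)).
  pose adj2 x y := adj x y && (y \notin nbh adj B).
  have cAB : #|A :\: B| <= n.
    have := cardsD A B; rewrite (setIidPr sBA) => ->.
    have : 0 < #|B| by rewrite card_gt0.
    lia.
  have [f2 [i2 a2]] : exists f : L -> R, {in A :\: B &, injective f} /\ {in A :\: B, forall x, adj2 x (f x)}.
    apply: IH => // C sC.
    have -> : nbh adj2 C = nbh adj C :\: nbh adj B.
      apply/setP=> y; rewrite !inE; apply/existsP/andP.
        by case=> x /andP[xC /andP[a nb]]; move: nb; rewrite inE => nb; split=> //; apply/existsP; exists x; rewrite xC.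
      by case=> nb /existsP[x /andP[xC a]]; exists x; rewrite xC /adj2 a inE nb.
    have h1 := hc (C :|: B).
    have sCB : C :|: B \subset A by rewrite subUset sBA (subset_trans sC) ?subsetDl.
    have dCB : C :&: B = set0.
      by apply/setP=> z; rewrite !inE; apply/andP=> -[zC zB]; move/fintype.subsetP: sC => /(_ z zC); rewrite inE zB.
    have := h1 sCB; rewrite nbhU => h2; move: h2; rewrite cardsU dCB cards0 subn0 => h2.
    have := cardsID (nbh adj B) (nbh adj C).
    have := cardsU (nbh adj C) (nbh adj B).
    rewrite setIC. lia.
  exists (fun x => if x \in B then f1 x else f2 x); split; last first.
    move=> x xA; case: ifP => xB; first exact: a1.
    have : x \in A :\: B by rewrite inE xB xA.
    by move/a2/andP=> [].
  move=> x y xA yA /=.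
  case: ifP => xB; case: ifP => yB.
  - exact: i1.
  - move=> e; have : y \in A :\: B by rewrite inE yB yA.
    move/a2; rewrite /adj2 -e.
    by rewrite (nbhP xB (a1 x xB)) andbF.
  - move=> e; have : x \in A :\: B by rewrite inE xB xA.
    move/a2; rewrite /adj2 e.
    by rewrite (nbhP yB (a1 y yB)) andbF.
  - by apply: i2; rewrite inE ?xB ?yB.
have [A0|/set0Pn[x xA]] := eqVneq A set0.
  by exists (fun _ => r0); split=> z; rewrite A0 inE.
have : 0 < #|nbh adj [set x]|.
  by apply: leq_trans (hc _ _); rewrite ?cards1 // sub1set.
rewrite card_gt0 => /set0Pn[y]; rewrite inE => /existsP[x' /andP[]]; rewrite inE => /eqP -> axy.
pose adj2 z w := adj z w && (w != y).
have [f2 [i2 a2]] : exists f : L -> R, {in A :\ x &, injective f} /\ {in A :\ x, forall z, adj2 z (f z)}.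
  apply: IH => [|C sC].
    by move: cA; rewrite (cardsD1 x A) xA.
  have [->|nC0] := eqVneq C set0; first by rewrite cards0.
  have pC : C \proper A.
    rewrite properEneq (subset_trans sC) ?subsetDl // andbT.
    by apply/eqP=> e; move/fintype.subsetP: sC => /(_ x); rewrite e xA !inE eqxx => /(_ isT).
  have h : #|C| < #|nbh adj C|.
    rewrite ltnNge; apply/negP=> le.
    by move/existsP: notight; apply; exists C; rewrite pC nC0 le.
  have : nbh adj C :\ y \subset nbh adj2 C.
    apply/fintype.subsetP=> w; rewrite !inE => /andP[wy /existsP[z /andP[zC a]]].
    by apply/existsP; exists z; rewrite zC /adj2 a wy.
  move/subset_leq_card; have := cardsD1 y (nbh adj C).
  case: (y \in _) => /=; lia.
exists (fun z => if z == x then y else f2 z); split; last first.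
  move=> z zA; case: eqP => [->//|/eqP zx].
  have : z \in A :\ x by rewrite !inE zx zA.
  by move/a2/andP=> [].
move=> z w zA wA /=.
case: eqP => [->|/eqP zx]; case: eqP => [->|/eqP wx] //.
- move=> e; have : w \in A :\ x by rewrite !inE wx wA.
  by move/a2; rewrite /adj2 -e eqxx andbF.
- move=> e; have : z \in A :\ x by rewrite !inE zx zA.
  by move/a2; rewrite /adj2 e eqxx andbF.
- by apply: i2; rewrite !inE ?zx ?wx.
Qed.


Lemma card_nat (N m : nat) (Q : nat -> bool) : m <= N.+1 ->
  #|[set o : 'I_N.+1 | (o < m) && Q o]| = \sum_(0 <= o < m) Q o.
Proof.
move=> hm; rewrite -sum1_card big_mkord (@big_ord_widen _ _ _ m N.+1 (fun i => nat_of_bool (Q i)) hm).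
rewrite big_mkcond [RHS]big_mkcond /=; apply: eq_bigr => i _.
by rewrite inE; case: (i < m) => //=; case: (Q i).
Qed.

Lemma sum_ltn (N m : nat) : m <= N.+1 -> \sum_(o < N.+1) (o < m) = m.
Proof.
move=> hm; rewrite (eq_bigr (fun o : 'I_N.+1 => if o < m then 1 else 0)); last by move=> i _; case: (i < m).
rewrite -big_mkcond /= -(@big_ord_widen _ _ _ m N.+1 (fun _ => 1) hm).
by rewrite sum_nat_const card_ord muln1.
Qed.

Lemma sum_div (F : nat -> nat) (tau P : nat) : 0 < tau ->
  \sum_(0 <= t < P * tau) F (t %/ tau) = tau * \sum_(0 <= k < P) F k.
Proof.
move=> t0; elim: P => [|P IH]; first by rewrite mul0n !big_geq // muln0.
rewrite big_nat_recr //= mulnDr -IH.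
rewrite mulSnr (@big_cat_nat _ _ _ (P * tau)) //=; last by rewrite leq_addr.
congr (_ + _); rewrite -{1}[P * tau]add0n big_addn addKn.
rewrite (@eq_big_nat _ _ _ _ _ _ (fun _ => F P)); first by rewrite sum_nat_const_nat subn0 mulnC.
by move=> i /andP[_ it]; rewrite divnDr ?dvdn_mull // mulnK // divn_small // addn0.
Qed.


Lemma card_sum (T : finType) (A : {pred T}) : #|A| = \sum_x (x \in A).
Proof. by rewrite -sum1_card big_mkcond /=; apply: eq_bigr => x _; case: (x \in A). Qed.

Lemma sum_pair (S I : finType) (f : S * I -> nat) :
  \sum_x f x = \sum_(X : S) \sum_(k : I) f (X, k).
Proof. by rewrite pair_big /=; apply: eq_bigr => -[X k] _. Qed.

Lemma sum_triple (S I J : finType) (f : S * I * J -> nat) :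
  \sum_x f x = \sum_(X : S) \sum_(k : I) \sum_(j : J) f (X, k, j).
Proof. by rewrite sum_pair (sum_pair (fun y => \sum_j f (y, j))). Qed.

Lemma card_sum_type (A B : finType) (Z : {set A + B}) :
  #|Z| = #|[set a | inl a \in Z]| + #|[set b | inr b \in Z]|.
Proof.
rewrite !card_sum big_sumType /=.
by congr (_ + _); apply: eq_bigr => x _; rewrite inE.
Qed.

Definition uA (S : finType) (T : nat) (P q : S -> nat) : {set S * 'I_T.+1 * 'I_T.+1} :=
  [set x : S * 'I_T.+1 * 'I_T.+1 | (x.1.2 < P x.1.1) && (x.2 <= q x.1.1)].
Definition uadj (S : finType) (T : nat) (tau P q e : S -> nat)
  (x : S * 'I_T.+1 * 'I_T.+1) (y : 'I_T.+1 + S * 'I_T.+1) : bool :=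
  match y with
  | inl t => (t < T) && (t %/ tau x.1.1 == x.1.2)
  | inr d => (x.2 == q x.1.1 :> nat) && (d.1 == x.1.1) && (d.2 < P x.1.1 - e x.1.1)
  end.

Lemma perX (cK q P e tau : nat) (h : bool) : cK <= P -> e < P ->
  cK * (q + h) * (P * tau) <= cK * tau * (q * P + e) + h * (P - e) * (P * tau).
Proof.
move=> cP eP; case: h => /=.
  have : cK * (P - e) * tau <= P * (P - e) * tau by rewrite !leq_mul2r cP !orbT.
  have : P - e + e = P by rewrite subnK // ltnW.
  nia.
nia.
Qed.

Lemma hall_cond (S : finType) (T : nat) (tau P q e : S -> nat) :
  (forall X, 0 < tau X) -> (forall X, P X * tau X = T) -> (forall X, e X < P X) ->
  \sum_X (q X * P X + e X) <= T ->
  forall B : {set S * 'I_T.+1 * 'I_T.+1}, B \subset uA T P q -> #|B| <= #|nbh (uadj tau P q e) B|.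
Proof.
move=> tau0 PT eP hsum B sB.
have [T0|Tpos] := posnP T.
  rewrite card_sum sum_triple big1 // => X _.
  exfalso; have h := PT X; rewrite T0 in h; have := eP X; have := tau0 X; nia.
pose kbn X k := [exists x in B, (x.1.1 == X) && (x.1.2 == k :> nat)].
pose hb X := [exists x in B, (x.1.1 == X) && (x.2 == q X :> nat)].
pose cK X := \sum_(0 <= k < P X) kbn X k.
have PleT X : P X <= T by rewrite -(PT X) leq_pmulr.
have inA x : x \in B -> (x.1.2 < P x.1.1) && (x.2 <= q x.1.1).
  by move=> xB; move/fintype.subsetP: sB => /(_ x xB); rewrite inE.
have s1 : #|B| <= \sum_X cK X * (q X + hb X).
  rewrite card_sum sum_triple; apply: leq_sum => X _.
  have h2 k : \sum_(j : 'I_T.+1) ((X, k, j) \in B) <= kbn X k * (q X + hb X).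
    case kb: (kbn X k); last first.
      rewrite big1 // => j _; apply/eqP; rewrite eqb0; apply/negP => xB.
      by move/negbT/existsP: kb; apply; exists (X, k, j); rewrite xB /= !eqxx.
    rewrite mul1n -(@sum_ltn T (q X + hb X)); last first.
      have := hsum; rewrite (bigD1 X) //= => hs; have := eP X; case: (hb X) => /=; nia.
    apply: leq_sum => j _; case xB: ((X, k, j) \in B) => //.
    have /andP[_ jq] := inA _ xB; rewrite /= in jq.
    case: (ltngtP j (q X)) => [jq'|jq'|jq']; first by rewrite ltn_addr.
      by move: jq; rewrite leqNgt jq'.
    have hbX : hb X by apply/existsP; exists (X, k, j); rewrite xB /= eqxx jq' eqxx.
    by rewrite hbX addn1 jq' ltnSn.
  apply: leq_trans; first by apply: leq_sum => k _; exact: h2.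
  rewrite -big_distrl /= leq_mul2r; apply/orP; right.
  rewrite /cK big_mkord [Z in _ <= Z](@big_ord_widen _ _ _ (P X) T.+1 (fun k => nat_of_bool (kbn X k))); last exact: leqW.
  rewrite [Z in _ <= Z]big_mkcond /=; apply: leq_sum => k _.
  case: ifP => // /negbT; rewrite -leqNgt => Pk.
  case kb : (kbn X k) => //; move/existsP: kb => [x /andP[xB /andP[/eqP xX /eqP xk]]].
  by have /andP[] := inA _ xB; rewrite xX xk ltnNge Pk.
pose W := [set t | inl t \in nbh (uadj tau P q e) B].
pose D := [set d | inr d \in nbh (uadj tau P q e) B].
have s3 X : tau X * cK X <= #|W|.
  have <- : #|[set t : 'I_T.+1 | (t < T) && kbn X (t %/ tau X)]| = tau X * cK X.
    by rewrite (@card_nat T T (fun t => kbn X (t %/ tau X))) // -{1}(PT X) (@sum_div (kbn X) (tau X) (P X)) //.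
  apply: subset_leq_card; apply/fintype.subsetP => t; rewrite !inE => /andP[tT].
  case/existsP => x /andP[xB /andP[/eqP xX /eqP xk]].
  by apply/existsP; exists x; rewrite xB /= tT xX xk eqxx.
have s4 : \sum_X hb X * (P X - e X) <= #|D|.
  rewrite card_sum sum_pair; apply: leq_sum => X _.
  case hbX : (hb X); last by rewrite mul0n.
  rewrite mul1n -(@sum_ltn T (P X - e X)); last by apply: leqW; apply: leq_trans (leq_subr _ _) (PleT X).
  apply: leq_sum => o _; case oP: (o < P X - e X) => //=.
  case/existsP: hbX => x /andP[xB /andP[/eqP xX /eqP xq]].
  rewrite lt0b inE; apply: (nbhP xB); rewrite /= xq xX !eqxx /=.
  by rewrite oP.
rewrite card_sum_type -/W -/D.
have cKP X : cK X <= P X.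
  apply: (@leq_trans (\sum_(0 <= k < P X) 1)); last by rewrite sum_nat_const_nat subn0 muln1.
  by rewrite /cK big_nat [Z in _ <= Z]big_nat; apply: leq_sum => k _; case: (kbn X k).
apply: (leq_trans s1); rewrite -(leq_pmul2r Tpos).
rewrite big_distrl /=.
apply: (@leq_trans (\sum_X (cK X * tau X * (q X * P X + e X) + hb X * (P X - e X) * (P X * tau X)))).
  by apply: leq_sum => X _; rewrite -(PT X); apply: perX.
rewrite big_split /= mulnDl; apply: leq_add; last first.
  under eq_bigr => Y _ do rewrite PT.
  by rewrite -big_distrl /= leq_mul2r s4 orbT.
apply: (@leq_trans (\sum_X #|W| * (q X * P X + e X))).
  by apply: leq_sum => X _; rewrite leq_mul2r (mulnC (cK X)) s3 orbT.
by rewrite -big_distrr /= leq_mul2l hsum orbT.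
Qed.


Definition pol (S : finType) (T : nat) (P q : S -> nat)
  (f : S * 'I_T.+1 * 'I_T.+1 -> 'I_T.+1 + S * 'I_T.+1) (t : nat) : option S :=
  if [pick x in uA T P q | f x == inl (inord t)] is Some x then Some x.1.1 else None.

Definition tinl (S : finType) (T : nat) (f : S * 'I_T.+1 * 'I_T.+1 -> 'I_T.+1 + S * 'I_T.+1)
  (X : S) (k qX : nat) : bool :=
  if f (X, inord k, inord qX) is inl _ then true else false.

Lemma pol_some (S : finType) (T : nat) (P q : S -> nat) f x (t : 'I_T.+1) :
  {in uA T P q &, injective f} -> x \in uA T P q -> f x = inl t ->
  pol P q f t = Some x.1.1.
Proof.
move=> fi xA fx; rewrite /pol inord_val.
case: pickP => [y /andP[yA /eqP fy]|/(_ x)]; last by rewrite xA fx eqxx.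
by rewrite (fi _ _ yA xA) // fy fx.
Qed.

Lemma count_lb (S : finType) (T : nat) (tau P q e : S -> nat) f :
  (forall X, 0 < tau X) -> (forall X, P X * tau X = T) -> (forall X, q X <= T) ->
  {in uA T P q &, injective f} -> {in uA T P q, forall x, uadj tau P q e x (f x)} ->
  forall X k, k < P X ->
  q X + tinl f X k (q X) <= \sum_(0 <= o < tau X) (pol P q f (k * tau X + o) == Some X).
Proof.
move=> tau0 PT qT fi fa X k kP.
have PleT : P X <= T by rewrite -(PT X) leq_pmulr.
have tleT : tau X <= T by rewrite -(PT X) leq_pmull // (leq_ltn_trans _ kP).
have kT : k < T.+1 by rewrite ltnS (leq_trans (ltnW kP)).
have qT1 : q X < T.+1 by rewrite ltnS.
pose U := [set x in uA T P q | (x.1.1 == X) && (x.1.2 == k :> nat) && (if f x is inl _ then true else false)].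
pose slot x := if f x is inl t then nat_of_ord t else 0.
pose g x : 'I_T.+1 := inord (slot x - k * tau X).
have hU x : x \in U -> exists2 t : 'I_T.+1, f x = inl t & [/\ x \in uA T P q, x.1.1 = X, k * tau X <= t & t < k * tau X + tau X].
  rewrite inE => /andP[xA /andP[/andP[/eqP xX /eqP xk]]].
  case fx : (f x) => [t|//] _; exists t => //.
  have := fa x xA; rewrite fx /= => /andP[tT /eqP tk].
  rewrite xX in tk; rewrite -xk -tk; split => //.
    by rewrite leq_trunc_div.
  by rewrite -mulSnr ltn_ceil.
have le1 : #|U| <= \sum_(0 <= o < tau X) (pol P q f (k * tau X + o) == Some X).
  rewrite -(@card_nat T (tau X) (fun o => pol P q f (k * tau X + o) == Some X)); last exact: leqW.
  rewrite -(card_in_imset (f := g)); last first.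
    move=> x y /hU[tx fx [xA xX t1 t2]] /hU[ty fy [yA yX u1 u2]].
    rewrite /g /slot fx fy => /(congr1 (@nat_of_ord _)); rewrite !inordK; last 2 first.
    - by rewrite ltnS (leq_trans (leq_subr _ _)) // -ltnS.
    - by rewrite ltnS (leq_trans (leq_subr _ _)) // -ltnS.
    move=> e1; apply: fi => //; rewrite fx fy; congr inl; apply: val_inj => /=.
    by move: e1 t1 u1; lia.
  apply: subset_leq_card; apply/fintype.subsetP => _ /imsetP[x /hU[t fx [xA xX t1 t2]] ->].
  rewrite inE /g /slot fx inordK; last by rewrite ltnS (leq_trans (leq_subr _ _)) // -ltnS.
  apply/andP; split; first by move: t1 t2; lia.
  by rewrite subnKC // -{1}[nat_of_ord t]/(nat_of_ord t) (pol_some fi xA fx) xX.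
apply: leq_trans le1.
pose J := [set j : 'I_T.+1 | (j < q X + tinl f X k (q X)) && true].
have cJ : #|J| = q X + tinl f X k (q X).
  rewrite (@card_nat T _ (fun _ => true)); first by rewrite sum_nat_const_nat subn0 muln1.
  by case: (tinl _ _ _ _) => /=; lia.
rewrite -cJ -(@card_in_imset _ _ (fun j : 'I_T.+1 => (X, (inord k : 'I_T.+1), j)) J); last first.
  by move=> j1 j2 _ _ [].
apply: subset_leq_card; apply/fintype.subsetP => y /imsetP[j jJ ->]; move: jJ; rewrite inE andbT => jq.
have jA : (X, inord k, j) \in uA T P q.
  rewrite inE /= inordK // kP /=.
  by move: jq; case: (tinl _ _ _ _) => /=; lia.
rewrite inE jA /= inordK // !eqxx /=.
case: (ltngtP j (q X)) => [jlt|jgt|jeq].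
- have := fa _ jA; case: (f _) => // d /=.
  by rewrite (ltn_eqF jlt).
- by move: jq; case: (tinl _ _ _ _) => /=; lia.
- move: jq; rewrite /tinl.
  have -> : inord (q X) = j by apply: val_inj; rewrite /= inordK.
  by case: (f _) => //=; rewrite addn0 jeq ltnn.
Qed.

Lemma dummy_lb (S : finType) (T : nat) (tau P q e : S -> nat) f :
  (forall X, 0 < tau X) -> (forall X, P X * tau X = T) -> (forall X, q X <= T) ->
  {in uA T P q &, injective f} -> {in uA T P q, forall x, uadj tau P q e x (f x)} ->
  forall X, e X <= P X -> e X <= \sum_(0 <= k < P X) tinl f X k (q X).
Proof.
move=> tau0 PT qT fi fa X eP.
have PleT : P X <= T by rewrite -(PT X) leq_pmulr.
have qT1 : q X < T.+1 by rewrite ltnS.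
have hs : \sum_(0 <= k < P X) tinl f X k (q X) + \sum_(0 <= k < P X) ~~ tinl f X k (q X) = P X.
  rewrite -big_split /= (eq_bigr (fun _ => 1)); first by rewrite sum_nat_const_nat subn0 muln1.
  by move=> k _; case: (tinl _ _ _ _).
suff : \sum_(0 <= k < P X) ~~ tinl f X k (q X) <= P X - e X by lia.
rewrite -(@card_nat T (P X) (fun k => ~~ tinl f X k (q X))); last exact: leqW.
pose top (k : 'I_T.+1) : S * 'I_T.+1 * 'I_T.+1 := (X, k, inord (q X)).
have topA (k : 'I_T.+1) : k < P X -> top k \in uA T P q.
  by move=> kP; rewrite inE /= kP /= inordK.
pose dd (k : 'I_T.+1) : 'I_T.+1 := if f (top k) is inr d then d.2 else ord0.
have hd (k : 'I_T.+1) : k \in [set k : 'I_T.+1 | (k < P X) && ~~ tinl f X k (q X)] ->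
    exists2 d, f (top k) = inr d & (d.1 = X /\ d.2 < P X - e X).
  rewrite inE => /andP[kP]; rewrite /tinl inord_val -/(top k).
  case fk : (f (top k)) => [//|d] _; exists d => //.
  have := fa _ (topA k kP); rewrite fk /= => /andP[/andP[_ /eqP ->] ->]; done.
have -> : P X - e X = #|[set o : 'I_T.+1 | (o < P X - e X) && true]|.
  rewrite (@card_nat T _ (fun _ => true)); first by rewrite sum_nat_const_nat subn0 muln1.
  by apply: leqW; apply: leq_trans (leq_subr _ _) PleT.
rewrite -(@card_in_imset _ _ dd); last first.
  move=> k1 k2 /[dup] k1K /hd[d1 f1 [d1X d1P]] /[dup] k2K /hd[d2 f2 [d2X d2P]].
  rewrite /dd f1 f2 => e12.
  have : top k1 = top k2.
    apply: fi; rewrite ?topA //; first by move: k1K; rewrite inE => /andP[].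
      by move: k2K; rewrite inE => /andP[].
    rewrite f1 f2; congr inr; move: d1 d2 d1X d2X e12 {f1 f2 d1P d2P} => [? ?] [? ?] /= -> -> ->; done.
  by case.
apply: subset_leq_card; apply/fintype.subsetP => y /imsetP[k kK ->].
have [d fk [_ dP]] := hd k kK.
by rewrite inE /dd fk dP.
Qed.

Local Open Scope ring_scope.

Lemma liminf_lb (R : realType) (T : nat) (s : nat -> R) (F : R) : (0 < T)%N -> 0 <= F ->
  (forall t, (t %/ T)%:R * F <= s t) ->
  (F%:E <= limn_einf (fun t : nat => (s t / (t%:R / T%:R))%:E))%E.
Proof.
move=> T0 F0 hs; apply/lee_mul01Pr; first by rewrite lee_fin.
move=> r /andP[r0 r1]; rewrite limn_einf_lim; apply: lime_ge; first exact: is_cvg_einfs.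
pose N := (Num.truncn (1 / (1 - r))).+1.
have hN : 1 / (1 - r) < N%:R by apply: truncnS_gt.
near=> n; apply: le_ereal_inf_tmp => _ [t /= nt <-].
have tN : (N * T <= t)%N by apply: leq_trans nt; near: n; exists (N * T)%N.
set m := (t %/ T)%N.
have mN : (N <= m)%N by rewrite /m leq_divRL.
have tm : (t < m.+1 * T)%N by rewrite /m ltn_ceil.
have Tpos : (0 : R) < T%:R by rewrite ltr0n.
have tpos : (0 : R) < t%:R by rewrite ltr0n; apply: leq_trans tN; rewrite muln_gt0 T0.
have tmR : t%:R < (m.+1)%:R * T%:R :> R by rewrite -natrM ltr_nat.
have mNR : N%:R <= m%:R :> R by rewrite ler_nat.
have hsm := hs t; rewrite -/m in hsm.
rewrite -EFinM lee_fin.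
have q0 : 0 < t%:R / T%:R :> R by rewrite divr_gt0.
rewrite ler_pdivlMr //.
have r1' : 0 < 1 - r by lra.
have h1 : 1 <= m%:R * (1 - r).
  have : 1 / (1 - r) * (1 - r) = 1 by field; lra.
  nra.
apply: le_trans hsm.
have : r * t%:R <= m%:R * T%:R.
  nra.
move=> h.
have h' : r * (t%:R / T%:R) <= m%:R by rewrite mulrA ler_pdivrMr.
have -> : r * F * (t%:R / T%:R) = F * (r * (t%:R / T%:R)) by ring.
by rewrite [m%:R * F]mulrC; apply: ler_wpM2l.
Unshelve. all: by end_near. Qed.


Lemma target_bound (R : realType) (tau : nat) (r : nat -> R) (n : nat -> nat) (P : nat) :
  (0 < P)%N -> (forall i j, (1 <= i)%N -> (i <= j)%N -> (j <= tau)%N -> r j <= r i) ->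
  0 <= r tau -> (forall i, (1 <= i <= tau)%N -> (n i <= P)%N) ->
  \sum_(1 <= i < tau.+1) (n i)%:R * r i <=
  P%:R * \sum_(1 <= i < ((\sum_(1 <= i < tau.+1) n i) %/ P).+1) r i
  + ((\sum_(1 <= i < tau.+1) n i) %% P)%:R * r ((\sum_(1 <= i < tau.+1) n i) %/ P).+1.
Proof.
move=> P0 rm r0 nP.
set M := (\sum_(1 <= i < tau.+1) n i)%N.
set q := (M %/ P)%N; set e := (M %% P)%N.
have rpos : forall i, (1 <= i <= tau)%N -> 0 <= r i.
  by move=> i /andP[i1 it]; apply: le_trans r0 (rm _ _ i1 it (leqnn _)).
have MP : (M <= tau * P)%N.
  rewrite /M; apply: leq_trans (_ : (\sum_(1 <= i < tau.+1) P <= _)%N).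
    by rewrite big_nat [X in (_ <= X)%N]big_nat; apply: leq_sum => i /andP[i1 it]; apply: nP; rewrite i1 -ltnS.
  by rewrite sum_nat_const_nat subn1.
have Meq : M = (q * P + e)%N by exact: divn_eq.
have qt : (q <= tau)%N by move: MP; rewrite Meq; nia.
case: (ltnP q tau) => qt'; last first.
  have qe : q = tau by apply/eqP; rewrite eqn_leq qt qt'.
  have e0 : e = 0%N by move: MP; rewrite Meq qe; lia.
  rewrite e0 mul0r addr0 qe mulr_sumr.
  apply: ler_sum_nat => i /andP[i1 it]; rewrite mulrC [_ * r i]mulrC.
  by apply: ler_wpM2l; [apply: rpos; rewrite i1 -ltnS | rewrite ler_nat nP // i1 -ltnS].
set c := r q.+1.
have c0 : 0 <= c by apply: rpos; rewrite ltn0Sn qt'.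
have split1 : \sum_(1 <= i < tau.+1) (n i)%:R * r i =
   \sum_(1 <= i < tau.+1) (n i)%:R * (r i - c) + M%:R * c.
  rewrite /M natr_sum mulr_suml -big_split /=.
  by apply: eq_bigr => i _; ring.
have b1 : \sum_(1 <= i < tau.+1) (n i)%:R * (r i - c) <=
          \sum_(1 <= i < tau.+1) (if (i <= q)%N then P%:R * (r i - c) else 0).
  apply: ler_sum_nat => i /andP[i1 it]; case: ifP => iq.
    apply: ler_wpM2r; first by rewrite subr_ge0 /c; apply: rm => //; apply: leqW.
    by rewrite ler_nat nP // i1 -ltnS.
  rewrite mulr_ge0_le0 //; rewrite subr_le0 /c; apply: rm => //; first by rewrite ltnNge iq.
have b2 : \sum_(1 <= i < tau.+1) (if (i <= q)%N then P%:R * (r i - c) else 0) =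
          P%:R * \sum_(1 <= i < q.+1) r i - (P * q)%:R * c.
  rewrite (@big_cat_nat _ _ _ q.+1) //=.
  rewrite [X in _ + X]big1_seq ?addr0; last first.
    by move=> i /andP[_]; rewrite mem_index_iota => /andP[qi _]; rewrite leqNgt qi.
  rewrite (@eq_big_nat _ _ _ _ _ _ (fun i => P%:R * (r i - c))); last first.
    by move=> i /andP[_ iq]; rewrite -ltnS iq.
  rewrite -mulr_sumr sumrB sumr_const_nat subn1 /= natrM; ring.
rewrite split1; apply: le_trans (lerD (le_trans b1 (le_refl _)) (le_refl _)) _.
rewrite b2 Meq natrD natrM natrM; lra.
Qed.


Local Open Scope ring_scope.

Lemma seq_reward (R : realType) (F : nat -> R) (b : nat -> bool) a m :
  \sum_(a <= u < a + m) (if b u then F (\sum_(a <= v < u.+1) b v)%N else 0) =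
  \sum_(1 <= i < (\sum_(a <= v < a + m) b v)%N.+1) F i.
Proof.
elim: m => [|m IH]; first by rewrite addn0 !big_geq.
rewrite addnS big_nat_recr ?leq_addr //= IH.
have hc : (\sum_(a <= v < (a + m).+1) b v = \sum_(a <= v < a + m) b v + b (a + m))%N.
  by rewrite big_nat_recr ?leq_addr.
rewrite hc; case: (b (a + m)) => /=; last by rewrite addr0 addn0.
by rewrite addn1 [in RHS]big_nat_recr.
Qed.

Lemma sum_mod (R : realType) (F : nat -> R) (P m : nat) :
  \sum_(0 <= K < (m * P)%N) F (K %% P)%N = (\sum_(0 <= k < P) F k) *+ m.
Proof.
elim: m => [|m IH]; first by rewrite mul0n big_geq.
rewrite mulSnr (@big_cat_nat _ _ _ (m * P)) ?leq_addr //= IH mulrSr; congr (_ + _).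
rewrite -{1}[(m * P)%N]add0n big_addn addKn; apply: eq_big_nat => k /andP[_ kP].
by rewrite addnC modnMDl modn_small.
Qed.

Local Open Scope ring_scope.

Theorem theorem3 (R : realType) (S : finType) (tau : S -> nat)
  (r : S -> nat -> R) (n : S -> nat -> nat)
  (tau_pos : forall X, (0 < tau X)%N)
  (r_mono : forall X i j, (1 <= i)%N -> (i <= j)%N -> (j <= tau X)%N -> r X j <= r X i)
  (r_nonneg : forall X, 0 <= r X (tau X))
  (n_bound : forall X i, (1 <= i <= tau X)%N -> (n X i <= frame tau %/ tau X)%N)
  (n_sum : (\sum_(X : S) \sum_(1 <= i < (tau X).+1) n X i <= frame tau)%N) :
  exists p : policy S, forall X : S,
    ((\sum_(1 <= i < (tau X).+1) (n X i)%:R * r X i)%:E <= avg_reward tau r p X)%E.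
Proof.
set T := frame tau.
have tauT X : (tau X %| T)%N by apply: (biglcmn_sup X) => //.
have T0 : (0 < T)%N.
  by rewrite /T /frame; elim/big_ind: _ => // x y; rewrite lcmn_gt0 => -> ->.
pose P X := (T %/ tau X)%N.
have PT X : (P X * tau X = T)%N by rewrite /P divnK.
have P0 X : (0 < P X)%N by rewrite /P divn_gt0 // dvdn_leq.
pose M X := (\sum_(1 <= i < (tau X).+1) n X i)%N.
pose q X := (M X %/ P X)%N.
pose e X := (M X %% P X)%N.
have eP X : (e X < P X)%N by rewrite /e ltn_pmod.
have Meq X : M X = (q X * P X + e X)%N by rewrite /q /e -divn_eq.
have hsum : (\sum_X (q X * P X + e X) <= T)%N.
  by rewrite (eq_bigr M) // => X _; rewrite Meq.
have qT X : (q X <= T)%N.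
  apply: leq_trans hsum; rewrite (bigD1 X) //=; have := P0 X; nia.
have [f [fi fa]] := @hall_gen _ _ (inl ord0) #|uA T P q| (uadj tau P q e) (uA T P q) (leqnn _)
  (hall_cond tau_pos PT eP hsum).
pose p : policy S := fun u => pol P q f (u %% T)%N.
exists p => X.
have rpos i : (1 <= i <= tau X)%N -> 0 <= r X i.
  by case/andP=> i1 it; apply: le_trans (r_nonneg X) (r_mono X _ _ i1 it (leqnn _)).
pose g c := \sum_(1 <= i < c.+1) r X i.
have gmono a b : (a <= b <= tau X)%N -> g a <= g b.
  case/andP=> ab bt; rewrite /g (@big_cat_nat _ _ _ a.+1 1 b.+1) //= ler_wpDr //.
  rewrite big_nat; apply: sumr_ge0 => i /andP[ai ib]; apply: rpos.
  by rewrite (leq_trans _ ai) //= (leq_trans _ bt) // -ltnS.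
pose b u := p u == Some X.
pose c K := (\sum_(K * tau X <= v < K * tau X + tau X) b v)%N.
have slot_ge0 u : 0 <= slot_reward tau r p X u.
  rewrite /slot_reward; case: ifP => // pu; apply: rpos.
  set a := (u %/ tau X * tau X)%N.
  have au : (a <= u)%N := leq_trunc_div u (tau X).
  have ut : (u < a + tau X)%N by rewrite /a -mulSnr ltn_ceil.
  rewrite /exec_count -/a big_nat_recr //= pu /= addn1 ltnS leq0n /=.
  apply: (@leq_trans (\sum_(a <= v < u) 1).+1)%N.
    by rewrite ltnS big_nat [Z in (_ <= Z)%N]big_nat; apply: leq_sum => v _; case: (_ == _).
  rewrite sum_nat_const_nat muln1; lia.
have sK K : total_reward tau r p X (K * tau X) = \sum_(0 <= K' < K) g (c K').
  elim: K => [|K IH]; first by rewrite /total_reward mul0n !big_geq.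
  rewrite big_nat_recr //= -IH /total_reward mulSnr (@big_cat_nat _ _ _ (K * tau X)) ?leq_addr //=.
  congr (_ + _); rewrite /g /c -seq_reward; apply: eq_big_nat => u /andP[Ku uK].
  rewrite /slot_reward /exec_count /b.
  have -> : (u %/ tau X = K)%N.
    rewrite -(subnKC Ku) divnMDl ?tau_pos // divn_small ?addn0 //; lia.
  by [].
have cK K : c K = (\sum_(0 <= o < tau X) (pol P q f ((K %% P X)%N * tau X + o) == Some X))%N.
  rewrite /c -{1}[(K * tau X)%N]add0n big_addn addKn; apply: eq_big_nat => o /andP[_ ot].
  rewrite /b /p.
  have hK : (K * tau X = K %/ P X * T + K %% P X * tau X)%N.
    by rewrite {1}(divn_eq K (P X)) mulnDl -(PT X) mulnA.
  rewrite hK addnC -addnA modnMDl modn_small // addnC.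
  have := ltn_pmod K (P0 X); have := PT X; nia.
have glb k : (k < P X)%N -> g (q X) + (tinl f X k (q X))%:R * r X (q X).+1 <=
    g (\sum_(0 <= o < tau X) (pol P q f (k * tau X + o) == Some X))%N.
  move=> kP; have h1 := count_lb tau_pos PT qT fi fa kP.
  set c0 := (\sum_(0 <= o < tau X) _)%N in h1 *.
  have h2 : (c0 <= tau X)%N.
    apply: (@leq_trans (\sum_(0 <= o < tau X) 1)%N); last by rewrite sum_nat_const_nat subn0 muln1.
    by rewrite /c0 big_nat [Z in (_ <= Z)%N]big_nat; apply: leq_sum => v _; case: (_ == _).
  move: h1; case: (tinl _ _ _ _) => /= h1.
    rewrite mul1r; have -> : g (q X) + r X (q X).+1 = g (q X).+1 by rewrite /g [in RHS]big_nat_recr.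
    by apply: gmono; rewrite -addn1 h1 h2.
  by rewrite mul0r addr0; apply: gmono; rewrite -[q X]addn0 h1 h2.
pose Bk k := g (q X) + (tinl f X k (q X))%:R * r X (q X).+1.
pose G := (P X)%:R * g (q X) + (e X)%:R * r X (q X).+1.
have BG : G <= \sum_(0 <= k < P X) Bk k.
  rewrite /Bk big_split /= sumr_const_nat subn0 -mulr_suml -natr_sum /G mulr_natl lerD2l.
  have dl := dummy_lb tau_pos PT qT fi fa (ltnW (eP X)).
  case: (ltnP (q X) (tau X)) => qt.
    by apply: ler_wpM2r; [apply: rpos; rewrite ltn0Sn | rewrite ler_nat].
  have s0 : (\sum_(0 <= k < P X) tinl f X k (q X) = 0)%N.
    rewrite big_nat big1 // => k kP; apply/eqP; rewrite eqb0; apply/negP => tk.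
    have := count_lb tau_pos PT qT fi fa kP; rewrite tk.
    have : (\sum_(0 <= o < tau X) (pol P q f (k * tau X + o) == Some X) <= tau X)%N.
      apply: (@leq_trans (\sum_(0 <= o < tau X) 1)%N); last by rewrite sum_nat_const_nat subn0 muln1.
      by rewrite big_nat [Z in (_ <= Z)%N]big_nat; apply: leq_sum => v _; case: (_ == _).
    lia.
  by move: dl; rewrite s0 leqn0 => /eqP ->.
have G0 : 0 <= G.
  apply: le_trans (target_bound (P0 X) (r_mono X) (r_nonneg X) (fun i hi => n_bound X i hi)).
  by rewrite big_nat; apply: sumr_ge0 => i hi; rewrite mulr_ge0 // rpos.
have key t : (t %/ T)%:R * G <= total_reward tau r p X t.
  set m := (t %/ T)%N.
  have mT : (m * T <= t)%N by apply: leq_trunc_div.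
  apply: (@le_trans _ _ (total_reward tau r p X (m * T))); last first.
    rewrite /total_reward [Z in _ <= Z](@big_cat_nat _ _ _ (m * T)) //= lerDl.
    by rewrite big_nat; apply: sumr_ge0 => u _.
  rewrite -(PT X) mulnA sK.
  apply: (@le_trans _ _ (\sum_(0 <= K < m * P X) Bk (K %% P X)%N)); last first.
    rewrite big_nat [Z in _ <= Z]big_nat; apply: ler_sum => K _.
    by rewrite cK; apply: glb; rewrite ltn_pmod.
  by rewrite sum_mod mulr_natl lerMn2r BG orbT.
apply: le_trans (liminf_lb T0 G0 key).
by rewrite lee_fin; apply: (target_bound (P0 X) (r_mono X) (r_nonneg X) (fun i hi => n_bound X i hi)).
Qed.
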